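(* Let $\beta\in(0,2)$, $v\in C([0,1],L(\mathbb{R}^d,\mathbb{R}^n))$ and $w\in\mathcal{C}^\beta(\mathbb{R}^d)$. Then the series $\pi_<(v,w):=\sum_{p=0}^\infty S_{p-1}v\,\Delta_pw$ converges uniformly, $\pi_<(v,w)\in\mathcal{C}^\beta(\mathbb{R}^n)$, and $\|\pi_<(v,w)\|_\beta\lesssim\|v\|_\infty\|w\|_\beta$.
   Context: Index set: pairs $(p,m)$ with either $p=-1,m=0$, or $p\in\mathbb{N}=\{0,1,2,\dots\}$ and $0\le m\le 2^p$. For $p\in\mathbb{N}$, $1\le m\le 2^p$ set $t^0_{pm}=(m-1)2^{-p}$, $t^1_{pm}=(2m-1)2^{-p-1}$, $t^2_{pm}=m2^{-p}$. Rescaled Haar functions: for $p\in\mathbb{N}$, $1\le m\le 2^p$, $\chi_{pm}=2^p$ on $[t^0_{pm},t^1_{pm})$, $=-2^p$ on $[t^1_{pm},t^2_{pm})$, $=0$ elsewhere; $\chi_{00}\equiv1$; $\chi_{p0}\equiv0$ for $p\ge1$. Rescaled Schauder functions: $\varphi_{pm}(t)=\int_0^t\chi_{pm}(s)\,ds$ for $p\in\mathbb{N}$, and $\varphi_{-10}\equiv1$. For continuous $f:[0,1]\to E$ ($E$ a finite-dimensional normed space), coefficients: $f_{-10}=f(0)$, $f_{00}=f(1)-f(0)$, $f_{p0}=0$ for $p\ge1$, $f_{pm}=2f(t^1_{pm})-f(t^0_{pm})-f(t^2_{pm})$ for $p\in\mathbb{N},m\ge1$. Schauder blocks: $\Delta_pf=\sum_{m=0}^{2^p}f_{pm}\varphi_{pm}$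 ($p\ge-1$), $S_pf=\sum_{q=-1}^p\Delta_qf$ (so $S_{-1}f\equiv f(0)$ and $S_pf$ is the piecewise linear interpolation of $f$ at the points $k2^{-p-1}$). For $\alpha>0$, $\|f\|_\alpha:=\sup_{p,m}2^{p\alpha}|f_{pm}|$ and $\mathcal{C}^\alpha(E):=\{f\in C([0,1],E):\|f\|_\alpha<\infty\}$. $\|\cdot\|_\infty$ is the sup norm; $\lesssim$ hides a constant independent of the functions. *)

(* Defs.v *)
From Stdlib Require Import Reals Lra.
Open Scope R_scope.

Fixpoint rsum (n : nat) (f : nat -> R) : R :=
  match n with O => 0 | S k => rsum k f + f k end.

Fixpoint rmaxn (n : nat) (f : nat -> R) : R :=
  match n with O => 0 | S k => Rmax (rmaxn k f) (f k) end.

(* Vectors of R^d are represented as nat -> R (coordinates 0..d-1);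
   norm: max norm. *)
Definition vnorm (d : nat) (x : nat -> R) : R := rmaxn d (fun i => Rabs (x i)).

(* Linear maps R^d -> R^n are matrices nat -> nat -> R (a i j, i<n, j<d);
   norm: the operator norm induced by the max norms (max row sum). *)
Definition mnorm (n d : nat) (a : nat -> nat -> R) : R :=
  rmaxn n (fun i => rsum d (fun j => Rabs (a i j))).

Definition matvec (d : nat) (a : nat -> nat -> R) (x : nat -> R) : nat -> R :=
  fun i => rsum d (fun j => a i j * x j).

Definition tt0 (p m : nat) : R := (INR m - 1) / 2 ^ p.
Definition tt1 (p m : nat) : R := (2 * INR m - 1) / 2 ^ (S p).
Definition tt2 (p m : nat) : R := INR m / 2 ^ p.

Definition coef (g : R -> R) (p m : nat) : R :=
  2 * g (tt1 p m) - g (tt0 p m) - g (tt2 p m).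

(* rescaled Schauder function phi_{pm}(t) = int_0^t chi_{pm}, p in N, m >= 1,
   written in closed form *)
Definition phi (p m : nat) (t : R) : R :=
  2 ^ p * Rmax 0 (Rmin t (tt1 p m) - tt0 p m)
  - 2 ^ p * Rmax 0 (Rmin t (tt2 p m) - tt1 p m).

(* Delta_p g for p in N (phi_{00}(t) = t, f_{00} = g 1 - g 0, f_{p0} = 0 for p >= 1) *)
Definition Delta (g : R -> R) (p : nat) (t : R) : R :=
  (if Nat.eqb p 0 then (g 1 - g 0) * t else 0)
  + rsum (Nat.pow 2 p) (fun k => coef g p (S k) * phi p (S k) t).

(* Sprev g p = S_{p-1} g = sum_{q=-1}^{p-1} Delta_q g, with Delta_{-1} g = g 0 *)
Fixpoint Sprev (g : R -> R) (p : nat) (t : R) : R :=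
  match p with
  | O => g 0
  | S q => Sprev g q t + Delta g q t
  end.

(* Partial sums sum_{p=0}^{N} S_{p-1} v Delta_p w (componentwise, using linearity) *)
Definition para_partial (d : nat) (v : R -> nat -> nat -> R) (w : R -> nat -> R)
  (N : nat) (t : R) : nat -> R :=
  fun i => rsum (S N) (fun p =>
     rsum d (fun j => Sprev (fun s => v s i j) p t * Delta (fun s => w s j) p t)).

Definition cont01 (g : R -> R) : Prop :=
  forall t, 0 <= t <= 1 -> forall eps, 0 < eps -> exists delta, 0 < delta /\
    forall s, 0 <= s <= 1 -> Rabs (s - t) < delta -> Rabs (g s - g t) < eps.

Definition cont01v (d : nat) (f : R -> nat -> R) : Prop :=
  forall i, (i < d)%nat -> cont01 (fun s => f s i).

Definition cont01m (n d : nat) (v : R -> nat -> nat -> R) : Prop :=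
  forall i j, (i < n)%nat -> (j < d)%nat -> cont01 (fun s => v s i j).

(* HolderBound alpha d f M  :<->  ||f||_alpha <= M, i.e.
   sup_{p,m} 2^{p alpha} |f_{pm}| <= M over all indices (p,m). *)
Definition HolderBound (alpha : R) (d : nat) (f : R -> nat -> R) (M : R) : Prop :=
  (* (p,m) = (-1,0) *)
  Rpower 2 (- alpha) * vnorm d (f 0) <= M /\
  (* (p,m) = (0,0) *)
  vnorm d (fun i => f 1 i - f 0 i) <= M /\
  (* p in N, 1 <= m <= 2^p ; (p>=1, m=0) coefficients vanish *)
  (forall p m, (1 <= m)%nat -> (m <= Nat.pow 2 p)%nat ->
     Rpower 2 (INR p * alpha) * vnorm d (fun i => coef (fun s => f s i) p m) <= M).

(* Main.v *)
Require Import Defs.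
From Stdlib Require Import Reals.
Open Scope R_scope.
From Stdlib Require Import Lra Lia Psatz ClassicalEpsilon.
Import Defs.

Lemma rsum_ext n f g : (forall k, (k < n)%nat -> f k = g k) -> rsum n f = rsum n g.
Proof. induction n; simpl; intros H; auto. rewrite IHn by (intros; apply H; lia). rewrite H by lia; auto. Qed.

Lemma rsum_plus n f g : rsum n (fun k => f k + g k) = rsum n f + rsum n g.
Proof. induction n; simpl; [lra|]. rewrite IHn; lra. Qed.

Lemma rsum_scal n c f : rsum n (fun k => c * f k) = c * rsum n f.
Proof. induction n; simpl; [lra|]. rewrite IHn; lra. Qed.

Lemma rsum_le n f g : (forall k, (k < n)%nat -> f k <= g k) -> rsum n f <= rsum n g.
Proof. induction n; simpl; intros H; [lra|].
 assert (rsum n f <= rsum n g) by (apply IHn; intros; apply H; lia).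
 assert (f n <= g n) by (apply H; lia). lra. Qed.

Lemma rsum_abs n f : Rabs (rsum n f) <= rsum n (fun k => Rabs (f k)).
Proof. induction n; simpl. rewrite Rabs_R0; lra.
 eapply Rle_trans; [apply Rabs_triang|]. lra. Qed.

Lemma rsum_nonneg n f : (forall k, (k < n)%nat -> 0 <= f k) -> 0 <= rsum n f.
Proof. intros H. replace 0 with (rsum n (fun _ => 0)). apply rsum_le; auto.
 clear H; induction n; simpl; lra. Qed.

Lemma rsum_zero n f : (forall k, (k < n)%nat -> f k = 0) -> rsum n f = 0.
Proof. induction n; simpl; intros H; auto. rewrite IHn by (intros; apply H; lia). rewrite H by lia; lra. Qed.

Lemma rsum_single n f k : (k < n)%nat -> (forall m, (m < n)%nat -> m <> k -> f m = 0) ->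
  rsum n f = f k.
Proof. induction n; intros Hk H; [lia|]. simpl.
 destruct (Nat.eq_dec k n) as [->|Hn].
 - rewrite rsum_zero; [lra|]. intros; apply H; lia.
 - rewrite IHn by (try lia; intros; apply H; lia). rewrite (H n) by lia. lra. Qed.

Lemma rsum_split n m f : rsum (n + m) f = rsum n f + rsum m (fun k => f (n + k)%nat).
Proof. induction m; simpl. rewrite Nat.add_0_r; lra. rewrite Nat.add_succ_r. simpl. rewrite IHm. lra. Qed.

Lemma rmaxn_nonneg n f : 0 <= rmaxn n f.
Proof. induction n; simpl; [lra|]. eapply Rle_trans; [apply IHn| apply Rmax_l]. Qed.

Lemma rmaxn_ge n f i : (i < n)%nat -> f i <= rmaxn n f.
Proof. induction n; intros H; [lia|]. simpl. destruct (Nat.eq_dec i n) as [->|].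
 apply Rmax_r. eapply Rle_trans; [apply IHn; lia| apply Rmax_l]. Qed.

Lemma rmaxn_lub n f M : 0 <= M -> (forall i, (i < n)%nat -> f i <= M) -> rmaxn n f <= M.
Proof. induction n; simpl; intros H0 H; auto. apply Rmax_lub. apply IHn; auto. apply H; lia. Qed.

Lemma rmaxn_lt n f M : 0 < M -> (forall i, (i < n)%nat -> f i < M) -> rmaxn n f < M.
Proof. induction n; simpl; intros H0 H; auto. apply Rmax_lub_lt. apply IHn; auto. apply H; lia. Qed.

Lemma vnorm_ge d x i : (i < d)%nat -> Rabs (x i) <= vnorm d x.
Proof. intros; unfold vnorm; apply (rmaxn_ge d (fun i => Rabs (x i))); auto. Qed.

Lemma vnorm_nonneg d x : 0 <= vnorm d x.
Proof. apply rmaxn_nonneg. Qed.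

Lemma mnorm_row n d a i : (i < n)%nat -> rsum d (fun j => Rabs (a i j)) <= mnorm n d a.
Proof. intros; unfold mnorm; apply (rmaxn_ge n (fun i => rsum d (fun j => Rabs (a i j)))); auto. Qed.

Lemma mnorm_nonneg n d a : 0 <= mnorm n d a.
Proof. apply rmaxn_nonneg. Qed.

Lemma rsum_prod_bound d a b B : (forall j, (j < d)%nat -> Rabs (b j) <= B) ->
  Rabs (rsum d (fun j => a j * b j)) <= rsum d (fun j => Rabs (a j)) * B.
Proof. intros H. eapply Rle_trans; [apply rsum_abs|].
 rewrite Rmult_comm, <- rsum_scal. apply rsum_le. intros k Hk.
 rewrite Rabs_mult. specialize (H k Hk). pose proof (Rabs_pos (a k)). nra. Qed.

Definition psi (X m : R) : R :=
  Rmax 0 (Rmin X (m + /2) - m) - Rmax 0 (Rmin X (m + 1) - (m + /2)).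

Ltac dd := repeat match goal with
  | |- context [Rle_dec ?x ?y] => destruct (Rle_dec x y)
  | H : context [Rle_dec ?x ?y] |- _ => destruct (Rle_dec x y)
  | H : ~ (_ <= _) |- _ => apply Rnot_le_lt in H
  end.

Lemma scal_maxmin c t a b : 0 < c ->
  c * Rmax 0 (Rmin t a - b) = Rmax 0 (Rmin (t * c) (a * c) - b * c).
Proof. intros Hc. unfold Rmax, Rmin. dd; nra. Qed.

Lemma pow2_pos p : 0 < 2 ^ p.
Proof. apply pow_lt; lra. Qed.

Lemma tt0S p m : tt0 p (S m) * 2 ^ p = INR m.
Proof. unfold tt0. rewrite S_INR. field. apply pow_nonzero; lra. Qed.
Lemma tt1S p m : tt1 p (S m) * 2 ^ p = INR m + /2.
Proof. unfold tt1. rewrite S_INR. simpl. field. apply pow_nonzero; lra. Qed.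
Lemma tt2S p m : tt2 p (S m) * 2 ^ p = INR m + 1.
Proof. unfold tt2. rewrite S_INR. field. apply pow_nonzero; lra. Qed.

Lemma phi_psi p m t : phi p (S m) t = psi (t * 2 ^ p) (INR m).
Proof. unfold phi, psi. pose proof (pow2_pos p).
 rewrite !scal_maxmin by auto. rewrite tt0S, tt1S, tt2S. reflexivity. Qed.

Ltac mm := unfold psi, Rmax, Rmin; dd; try lra.

Lemma psi_le X m : X <= m -> psi X m = 0. Proof. intros; mm. Qed.
Lemma psi_ge X m : m + 1 <= X -> psi X m = 0. Proof. intros; mm. Qed.
Lemma psi_left X m : m <= X <= m + /2 -> psi X m = X - m. Proof. intros; mm. Qed.
Lemma psi_right X m : m + /2 <= X <= m + 1 -> psi X m = m + 1 - X. Proof. intros; mm. Qed.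
Lemma psi_bound X m : Rabs (psi X m) <= /2.
Proof. unfold Rabs; destruct Rcase_abs; mm. Qed.

Lemma maxmin_lip s t a b : Rabs (Rmax 0 (Rmin s a - b) - Rmax 0 (Rmin t a - b)) <= Rabs (s - t).
Proof. unfold Rmax, Rmin. dd; unfold Rabs; repeat destruct Rcase_abs; lra. Qed.

Definition In (q k : nat) (t : R) := INR k <= t * 2 ^ q <= INR k + 1.

Lemma exists_k q t : 0 <= t <= 1 -> exists k, (k < Nat.pow 2 q)%nat /\ In q k t.
Proof. intros Ht. induction q.
 - exists 0%nat. unfold In; simpl; split; [lia|lra].
 - destruct IHq as [k [Hk Hi]]. unfold In in *.
   rewrite Nat.pow_succ_r'. simpl pow.
   destruct (Rle_dec (t * (2 * 2 ^ q)) (2 * INR k + 1)).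
   + exists (2 * k)%nat. split; [lia|]. rewrite mult_INR; simpl; lra.
   + exists (2 * k + 1)%nat. split; [lia|]. rewrite plus_INR, mult_INR; simpl; lra.
Qed.

Lemma parent p k t : (k < Nat.pow 2 (S p))%nat -> In (S p) k t ->
  (Nat.div2 k < Nat.pow 2 p)%nat /\ In p (Nat.div2 k) t /\
  (k = 2 * Nat.div2 k \/ k = 2 * Nat.div2 k + 1)%nat.
Proof. intros Hk Hi. pose proof (Nat.div2_odd k) as E.
 assert (Hd : (k = 2 * Nat.div2 k \/ k = 2 * Nat.div2 k + 1)%nat)
   by (destruct (Nat.odd k); simpl in E; lia).
 rewrite Nat.pow_succ_r' in Hk. split; [lia|]. split; auto.
 unfold In in *. simpl pow in Hi.
 destruct Hd as [H|H]; rewrite H in Hi; rewrite ?plus_INR, mult_INR in Hi; simpl in Hi; lra.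
Qed.

Lemma contain dd q k : (k < Nat.pow 2 (q + dd))%nat -> exists k', (k' < Nat.pow 2 q)%nat /\
  forall t, In (q + dd) k t -> In q k' t.
Proof. revert k. induction dd; intros k Hk.
 - rewrite Nat.add_0_r in *. exists k; auto.
 - rewrite Nat.add_succ_r in *.
   assert (Hd : (Nat.div2 k < Nat.pow 2 (q + dd))%nat).
   { pose proof (Nat.div2_odd k) as E. rewrite Nat.pow_succ_r' in Hk.
     destruct (Nat.odd k); simpl in E; lia. }
   destruct (IHdd _ Hd) as [k' [Hk' HH]]. exists k'. split; auto.
   intros t Ht. apply HH. apply (parent _ _ _ Hk Ht).
Qed.

Lemma INR_pow2 q : INR (Nat.pow 2 q) = 2 ^ q.
Proof. rewrite pow_INR. reflexivity. Qed.

Lemma In_pts q k t : (k < Nat.pow 2 q)%nat -> In q k t -> 0 <= INR k / 2 ^ q /\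
  INR k / 2^q <= 1 /\ 0 <= (INR k + 1) / 2 ^ q /\ (INR k + 1) / 2 ^ q <= 1.
Proof. intros Hk _. pose proof (pow2_pos q).
 assert (INR (S k) <= INR (Nat.pow 2 q)) by (apply le_INR; lia).
 rewrite S_INR, INR_pow2 in H0. pose proof (pos_INR k).
 repeat split; unfold Rdiv.
 all: try (apply Rmult_le_pos; [lra| left; apply Rinv_0_lt_compat; lra]).
 all: apply (Rmult_le_reg_r (2^q)); auto; rewrite Rmult_assoc, Rinv_l; lra.
Qed.

Definition Rp (g : R -> R) p t := rsum (Nat.pow 2 p) (fun k => coef g p (S k) * phi p (S k) t).

Lemma R_loc (g : R -> R) (p : nat) k (t : R) : (k < Nat.pow 2 p)%nat -> In p k t ->
  Rp g p t = coef g p (S k) * psi (t * 2 ^ p) (INR k).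
Proof. intros Hk Hi. unfold Rp. rewrite (rsum_single _ _ k Hk).
 - rewrite phi_psi; auto.
 - intros m Hm Hne. rewrite phi_psi. unfold In in Hi.
   destruct (Nat.lt_ge_cases m k).
   + rewrite psi_ge. lra. assert (INR (S m) <= INR k) by (apply le_INR; lia).
     rewrite S_INR in H0; lra.
   + rewrite psi_le. lra. assert (INR (S k) <= INR m) by (apply le_INR; lia).
     rewrite S_INR in H0; lra.
Qed.

Lemma Delta_R (g : R -> R) p t : Delta g p t = (if Nat.eqb p 0 then (g 1 - g 0) * t else 0) + Rp g p t.
Proof. reflexivity. Qed.

Lemma tt0E p m : tt0 p (S m) = INR m / 2 ^ p.
Proof. unfold tt0; rewrite S_INR; unfold Rdiv; ring. Qed.
Lemma tt2E p m : tt2 p (S m) = (INR m + 1) / 2 ^ p.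
Proof. unfold tt2; rewrite S_INR; auto. Qed.
Lemma tt1E p m : tt1 p (S m) = (2 * INR m + 1) / 2 ^ (S p).
Proof. unfold tt1; rewrite S_INR; unfold Rdiv; ring. Qed.

Lemma coefE (g : R -> R) p m : coef g p (S m) =
  2 * g ((2 * INR m + 1) / 2 ^ (S p)) - g (INR m / 2 ^ p) - g ((INR m + 1) / 2 ^ p).
Proof. unfold coef; rewrite tt0E, tt1E, tt2E; auto. Qed.


Lemma interp (g : R -> R) q : forall k t, (k < Nat.pow 2 (S q))%nat -> In (S q) k t ->
  Sprev g (S q) t = g (INR k / 2 ^ (S q)) +
     (t * 2 ^ (S q) - INR k) * (g ((INR k + 1) / 2 ^ (S q)) - g (INR k / 2 ^ (S q))).
Proof. induction q; intros k t Hk Hi.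
 - simpl in Hk. assert (k = 0 \/ k = 1)%nat as Hk01 by lia.
   assert (H0 : In 0 0 t) by (unfold In in *; simpl in *; destruct Hk01 as [->| ->]; simpl in *; lra).
   simpl Sprev. rewrite Delta_R.
   rewrite (R_loc g 0 0 t) by (simpl; auto; lia). simpl Nat.eqb. cbv iota.
   rewrite coefE. simpl INR.
   replace ((2 * 0 + 1) / 2 ^ 1) with (/2) by (simpl; field).
   replace (0 / 2 ^ 0) with 0 by (simpl; field).
   replace ((0 + 1) / 2 ^ 0) with 1 by (simpl; field).
   unfold In in Hi. simpl pow in *.
   destruct Hk01 as [->| ->]; simpl INR in *.
   + replace (0 / (2*1)) with 0 by field. replace ((0+1)/(2*1)) with (/2) by field.
     rewrite psi_left by lra. ring.
   + replace (1 / (2*1)) with (/2) by field. replace ((1+1)/(2*1)) with 1 by field.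
     rewrite psi_right by lra. ring.
 - destruct (parent _ _ _ Hk Hi) as [Hk2 [Hi2 Hd]].
   set (k2 := Nat.div2 k) in *.
   change (Sprev g (S (S q)) t) with (Sprev g (S q) t + Delta g (S q) t).
   rewrite (IHq k2 t Hk2 Hi2). rewrite Delta_R. rewrite (R_loc g (S q) k2 t Hk2 Hi2).
   simpl Nat.eqb; cbv iota. rewrite coefE.
   assert (P2 : 2 ^ S (S q) = 2 * 2 ^ S q) by reflexivity.
   pose proof (pow2_pos (S q)) as Hp.
   unfold In in Hi. rewrite P2 in Hi.
   assert (I2 : INR 2 = 2) by (simpl; lra).
   destruct Hd as [E|E]; rewrite E in *; rewrite ?plus_INR, mult_INR in *; rewrite ?I2, ?INR_1 in *.
   + change (2 ^ S (S q)) with (2 * 2 ^ S q). replace (2 * INR k2 / (2 * 2 ^ S q)) with (INR k2 / 2 ^ S q) by (field; lra).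
     rewrite psi_left by lra. ring.
   + change (2 ^ S (S q)) with (2 * 2 ^ S q). replace ((2 * INR k2 + 1 + 1) / (2 * 2 ^ S q)) with ((INR k2 + 1) / 2 ^ S q) by (field; lra).
     rewrite psi_right by lra. ring.
Qed.

Lemma pts01 q k : (k < Nat.pow 2 q)%nat -> 0 <= INR k / 2 ^ q <= 1 /\ 0 <= (INR k + 1) / 2 ^ q <= 1.
Proof. intros Hk. assert (In q k (INR k / 2 ^ q)).
 { unfold In. pose proof (pow2_pos q). unfold Rdiv; rewrite Rmult_assoc, Rinv_l; lra. }
 destruct (In_pts q k _ Hk H) as [? [? [? ?]]]; lra. Qed.

Lemma Sprev_conv q t : 0 <= t <= 1 -> exists a b l, 0 <= a <= 1 /\ 0 <= b <= 1 /\ 0 <= l <= 1 /\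
  forall g, Sprev g q t = (1 - l) * g a + l * g b.
Proof. intros Ht. destruct q.
 - exists 0, 0, 0. repeat split; try lra. intros; simpl; ring.
 - destruct (exists_k (S q) t Ht) as [k [Hk Hi]].
   exists (INR k / 2 ^ S q), ((INR k + 1) / 2 ^ S q), (t * 2 ^ S q - INR k).
   destruct (pts01 _ _ Hk). unfold In in Hi.
   repeat split; try lra. intros g. rewrite (interp g q k t Hk Hi). ring.
Qed.

Lemma Delta_grid (g : R -> R) q t K : 0 <= t <= 1 -> t * 2 ^ (S q) = INR K -> Delta g (S q) t = 0.
Proof. intros Ht HK. destruct (exists_k (S q) t Ht) as [k [Hk Hi]].
 rewrite Delta_R, (R_loc g _ k t Hk Hi). simpl Nat.eqb; cbv iota.
 unfold In in Hi. rewrite HK in *.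
 assert (k <= K)%nat by (apply INR_le; lra).
 assert (K <= S k)%nat by (apply INR_le; rewrite S_INR; lra).
 assert (K = k \/ K = S k)%nat as [->| ->] by lia.
 - rewrite psi_le; lra.
 - rewrite psi_ge. lra. rewrite S_INR; lra.
Qed.

Lemma Delta_bound q t : 0 <= t <= 1 -> exists k, (k < Nat.pow 2 (S q))%nat /\
  forall g, Rabs (Delta g (S q) t) <= Rabs (coef g (S q) (S k)) / 2.
Proof. intros Ht. destruct (exists_k (S q) t Ht) as [k [Hk Hi]]. exists k; split; auto.
 intros g. rewrite Delta_R, (R_loc g _ k t Hk Hi). simpl Nat.eqb; cbv iota.
 rewrite Rplus_0_l, Rabs_mult. pose proof (psi_bound (t * 2 ^ S q) (INR k)).
 pose proof (Rabs_pos (coef g (S q) (S k))). nra. Qed.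

Lemma Sprev_affine q k : (k < Nat.pow 2 q)%nat -> exists a b, 0 <= a <= 1 /\ 0 <= b <= 1 /\
  forall g, exists al, forall t, In q k t ->
    Sprev g q t = al + (if Nat.eqb q 0 then 0 else 2 ^ q * (g b - g a)) * t.
Proof. intros Hk. destruct q.
 - exists 0, 0. repeat split; try lra. intros g; exists (g 0). intros; simpl; ring.
 - exists (INR k / 2 ^ S q), ((INR k + 1) / 2 ^ S q). destruct (pts01 _ _ Hk).
   repeat split; try lra. intros g.
   exists (g (INR k / 2 ^ S q) - INR k * (g ((INR k + 1) / 2 ^ S q) - g (INR k / 2 ^ S q))).
   intros t Hi. rewrite (interp g q k t Hk Hi). simpl Nat.eqb; cbv iota. ring.
Qed.

Lemma Delta_affine q k2 : (k2 < Nat.pow 2 (S q))%nat -> exists k s, (k < Nat.pow 2 q)%nat /\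
  Rabs s = 1 /\ (forall t, In (S q) k2 t -> In q k t) /\
  forall g, exists al, forall t, In (S q) k2 t ->
    Delta g q t = al + ((if Nat.eqb q 0 then g 1 - g 0 else 0) + s * 2 ^ q * coef g q (S k)) * t.
Proof. intros Hk2.
 pose proof (Nat.div2_odd k2) as E.
 assert (Hd : (k2 = 2 * Nat.div2 k2 \/ k2 = 2 * Nat.div2 k2 + 1)%nat)
   by (destruct (Nat.odd k2); simpl in E; lia).
 assert (Hk : (Nat.div2 k2 < Nat.pow 2 q)%nat) by (rewrite Nat.pow_succ_r' in Hk2; lia).
 set (k := Nat.div2 k2) in *.
 assert (HI : forall t, In (S q) k2 t -> In q k t).
 { intros t Ht. exact (proj1 (proj2 (parent q k2 t Hk2 Ht))). }
 pose proof (pow2_pos q) as Hp.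
 assert (I2 : INR 2 = 2) by (simpl; lra).
 destruct Hd as [Ed|Ed].
 - exists k, 1. split; [auto|]. split; [apply Rabs_R1|]. split; [auto|].
   intros g. exists (- coef g q (S k) * INR k). intros t Ht. rewrite Delta_R, (R_loc g _ k t Hk (HI t Ht)).
   unfold In in Ht. change (2 ^ S q) with (2 * 2 ^ q) in Ht. rewrite Ed, mult_INR, I2 in Ht.
   rewrite psi_left by lra. destruct (q =? 0); ring.
 - exists k, (-1). split; [auto|]. split; [unfold Rabs; destruct Rcase_abs; lra|]. split; [auto|].
   intros g. exists (coef g q (S k) * (INR k + 1)). intros t Ht. rewrite Delta_R, (R_loc g _ k t Hk (HI t Ht)).
   unfold In in Ht. change (2 ^ S q) with (2 * 2 ^ q) in Ht. rewrite Ed, plus_INR, mult_INR, I2, INR_1 in Ht.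
   rewrite psi_right by lra. destruct (q =? 0); ring.
Qed.

Lemma coef_rsum n (F : nat -> R -> R) p m :
  coef (fun s => rsum n (fun q => F q s)) p m = rsum n (fun q => coef (F q) p m).
Proof. induction n; unfold coef in *; simpl. ring. rewrite <- IHn. ring. Qed.

Lemma In_tt p k : In p k (tt0 p (S k)) /\ In p k (tt1 p (S k)) /\ In p k (tt2 p (S k)).
Proof. unfold In; rewrite tt0S, tt1S, tt2S; lra. Qed.

Lemma tt_diff p k : tt1 p (S k) = tt0 p (S k) + / 2 ^ S p /\ tt2 p (S k) = tt0 p (S k) + 2 * / 2 ^ S p.
Proof. pose proof (pow2_pos p). rewrite tt0E, tt1E, tt2E. simpl pow. split; field; lra. Qed.

Lemma coef_affprod p k (A B : R -> R) al a be b :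
  (forall t, In p k t -> A t = al + a * t) -> (forall t, In p k t -> B t = be + b * t) ->
  coef (fun s => A s * B s) p (S k) = - 2 * a * b * (/ 2 ^ S p) ^ 2.
Proof. intros HA HB. destruct (In_tt p k) as [I0 [I1 I2]]. unfold coef.
 rewrite !HA, !HB by auto. destruct (tt_diff p k) as [E1 E2]. rewrite E1, E2. ring. Qed.

Lemma coef_top p k (A : R -> R) (g : R -> R) : (k < Nat.pow 2 (S p))%nat ->
  coef (fun s => A s * Delta g (S p) s) (S p) (S k) = A (tt1 (S p) (S k)) * coef g (S p) (S k).
Proof. intros Hk. destruct (In_tt (S p) k) as [I0 [I1 I2]]. unfold coef at 1.
 rewrite !Delta_R, !(R_loc g _ k _ Hk) by auto. simpl Nat.eqb; cbv iota.
 rewrite tt0S, tt1S, tt2S. rewrite (psi_le (INR k)), (psi_ge (INR k + 1)), (psi_left (INR k + /2)) by lra. field. Qed.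

Lemma coef_top0 c (g : R -> R) :
  coef (fun s => c * Delta g 0 s) 0 1 = c * coef g 0 1.
Proof. destruct (In_tt 0 0) as [I0 [I1 I2]]. unfold coef at 1.
 rewrite !Delta_R, !(R_loc g 0 0) by (auto; simpl; lia). simpl Nat.eqb; cbv iota.
 pose proof (tt0S 0 0) as H0. pose proof (tt1S 0 0) as H1. pose proof (tt2S 0 0) as H2.
 simpl pow in *. simpl INR in *. rewrite H0, H1, H2.
 rewrite (psi_le 0), (psi_ge (0+1)), (psi_left (0 + /2)) by lra. rewrite Rmult_1_r in H0, H1, H2.
 rewrite H0, H1, H2. field. Qed.

Definition Lip (g : R -> R) := exists L, 0 <= L /\ forall s t, Rabs (g s - g t) <= L * Rabs (s - t).

Lemma Lip_const c : Lip (fun _ => c).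
Proof. exists 0. split; [lra|]. intros. replace (c - c) with 0 by ring. rewrite Rabs_R0. pose proof (Rabs_pos (s-t)); nra. Qed.

Lemma Lip_lin c : Lip (fun t => c * t).
Proof. exists (Rabs c). split; [apply Rabs_pos|]. intros. rewrite <- Rabs_mult. right; f_equal; ring. Qed.

Lemma Lip_plus f g : Lip f -> Lip g -> Lip (fun t => f t + g t).
Proof. intros [L1 [H1 F1]] [L2 [H2 F2]]. exists (L1 + L2). split; [lra|]. intros s t.
 replace (f s + g s - (f t + g t)) with ((f s - f t) + (g s - g t)) by ring.
 eapply Rle_trans; [apply Rabs_triang|]. specialize (F1 s t); specialize (F2 s t). lra. Qed.

Lemma Lip_scal c f : Lip f -> Lip (fun t => c * f t).
Proof. intros [L [H F]]. exists (Rabs c * L). split. apply Rmult_le_pos; auto; apply Rabs_pos.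
 intros s t. replace (c * f s - c * f t) with (c * (f s - f t)) by ring. rewrite Rabs_mult.
 rewrite Rmult_assoc. apply Rmult_le_compat_l; auto. apply Rabs_pos. Qed.

Lemma Lip_rsum n (F : nat -> R -> R) : (forall k, (k < n)%nat -> Lip (F k)) -> Lip (fun t => rsum n (fun k => F k t)).
Proof. induction n; intros H; simpl. apply Lip_const.
 apply (Lip_plus (fun t => rsum n (fun k => F k t)) (F n)). apply IHn; intros; apply H; lia. apply H; lia. Qed.

Lemma Lip_phi p m : Lip (phi p m).
Proof. exists (2 * 2 ^ p). pose proof (pow2_pos p). split; [lra|]. intros s t. unfold phi.
 set (a := Rmax 0 (Rmin s (tt1 p m) - tt0 p m)). set (b := Rmax 0 (Rmin t (tt1 p m) - tt0 p m)).
 set (c := Rmax 0 (Rmin s (tt2 p m) - tt1 p m)). set (e := Rmax 0 (Rmin t (tt2 p m) - tt1 p m)).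
 pose proof (maxmin_lip s t (tt1 p m) (tt0 p m)). pose proof (maxmin_lip s t (tt2 p m) (tt1 p m)).
 fold a b c e in H0, H1.
 replace (2 ^ p * a - 2 ^ p * c - (2 ^ p * b - 2 ^ p * e)) with (2 ^ p * (a - b) - 2 ^ p * (c - e)) by ring.
 eapply Rle_trans; [apply Rabs_triang|]. rewrite Rabs_Ropp, !Rabs_mult, (Rabs_right (2^p)) by lra. nra. Qed.

Lemma Lip_Delta g p : Lip (Delta g p).
Proof. unfold Delta.
 apply (Lip_plus (fun t => if Nat.eqb p 0 then (g 1 - g 0) * t else 0)
          (fun t => rsum (Nat.pow 2 p) (fun k => coef g p (S k) * phi p (S k) t))).
 - destruct (Nat.eqb p 0). apply Lip_lin. apply Lip_const.
 - apply (Lip_rsum _ (fun k t => coef g p (S k) * phi p (S k) t)). intros; apply Lip_scal, Lip_phi. Qed.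

Lemma Lip_Sprev g p : Lip (Sprev g p).
Proof. induction p; simpl. apply Lip_const. apply (Lip_plus (Sprev g p) (Delta g p)); auto. apply Lip_Delta. Qed.

Definition Lip01 (g : R -> R) := exists L, 0 <= L /\ forall s t, 0 <= s <= 1 -> 0 <= t <= 1 ->
  Rabs (g s - g t) <= L * Rabs (s - t).

Lemma Lip_Lip01 g : Lip g -> Lip01 g.
Proof. intros [L [H F]]; exists L; split; auto. Qed.

Lemma Lip01_bound g : Lip01 g -> exists B, 0 <= B /\ forall t, 0 <= t <= 1 -> Rabs (g t) <= B.
Proof. intros [L [H F]]. exists (Rabs (g 0) + L). split. pose proof (Rabs_pos (g 0)); lra.
 intros t Ht. specialize (F t 0 Ht ltac:(lra)). rewrite Rminus_0_r in F.
 rewrite (Rabs_right t) in F by lra.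
 replace (g t) with (g 0 + (g t - g 0)) by ring. eapply Rle_trans; [apply Rabs_triang|]. nra. Qed.

Lemma Lip01_plus f g : Lip01 f -> Lip01 g -> Lip01 (fun t => f t + g t).
Proof. intros [L1 [H1 F1]] [L2 [H2 F2]]. exists (L1 + L2). split; [lra|]. intros s t Hs Ht.
 replace (f s + g s - (f t + g t)) with ((f s - f t) + (g s - g t)) by ring.
 eapply Rle_trans; [apply Rabs_triang|]. specialize (F1 s t Hs Ht); specialize (F2 s t Hs Ht). lra. Qed.

Lemma Lip01_rsum n (F : nat -> R -> R) : (forall k, (k < n)%nat -> Lip01 (F k)) -> Lip01 (fun t => rsum n (fun k => F k t)).
Proof. induction n; intros H; simpl. apply Lip_Lip01, Lip_const.
 apply (Lip01_plus (fun t => rsum n (fun k => F k t)) (F n)). apply IHn; intros; apply H; lia. apply H; lia. Qed.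

Lemma Lip01_mult f g : Lip01 f -> Lip01 g -> Lip01 (fun t => f t * g t).
Proof. intros Hf Hg. destruct (Lip01_bound f Hf) as [Bf [HBf Bf']]. destruct (Lip01_bound g Hg) as [Bg [HBg Bg']].
 destruct Hf as [L1 [H1 F1]]. destruct Hg as [L2 [H2 F2]].
 exists (Bf * L2 + Bg * L1). split; [nra|]. intros s t Hs Ht.
 replace (f s * g s - f t * g t) with (f s * (g s - g t) + g t * (f s - f t)) by ring.
 eapply Rle_trans; [apply Rabs_triang|]. rewrite !Rabs_mult.
 specialize (F1 s t Hs Ht); specialize (F2 s t Hs Ht). specialize (Bf' s Hs). specialize (Bg' t Ht).
 pose proof (Rabs_pos (f s)). pose proof (Rabs_pos (g t)). pose proof (Rabs_pos (g s - g t)).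
 pose proof (Rabs_pos (f s - f t)). pose proof (Rabs_pos (s - t)). nra. Qed.

Lemma Lip01_cont g : Lip01 g -> cont01 g.
Proof. intros [L [H F]] t Ht eps He. exists (eps / (L + 1)). split.
 apply Rdiv_lt_0_compat; lra. intros s Hs Hst. eapply Rle_lt_trans; [apply F; auto|].
 apply Rle_lt_trans with (L * (eps / (L + 1))). apply Rmult_le_compat_l; lra.
 assert (L * (eps / (L + 1)) = eps - eps / (L + 1)) by (field; lra).
 assert (0 < eps / (L+1)) by (apply Rdiv_lt_0_compat; lra). lra. Qed.

Lemma partial_Lip01 d (v : R -> nat -> nat -> R) (w : R -> nat -> R) N i :
  Lip01 (fun t => para_partial d v w N t i).
Proof. unfold para_partial.
 apply (Lip01_rsum _ (fun p t => rsum d (fun j => Sprev (fun s => v s i j) p t * Delta (fun s => w s j) p t))).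
 intros p _. apply (Lip01_rsum _ (fun j t => Sprev (fun s => v s i j) p t * Delta (fun s => w s j) p t)).
 intros j _. apply (Lip01_mult (Sprev (fun s => v s i j) p) (Delta (fun s => w s j) p));
 apply Lip_Lip01; [apply Lip_Sprev| apply Lip_Delta]. Qed.

Definition clamp (x : R) := Rmax 0 (Rmin x 1).

Lemma clamp_prop x : 0 <= clamp x <= 1 /\ forall c, 0 <= c <= 1 -> Rabs (clamp x - c) <= Rabs (x - c).
Proof. unfold clamp, Rmax, Rmin. dd; split; try lra; intros c Hc; unfold Rabs; repeat destruct Rcase_abs; lra. Qed.

Lemma bounded01 g : cont01 g -> exists B, 0 <= B /\ forall t, 0 <= t <= 1 -> Rabs (g t) <= B.
Proof. intros Hg.
 destruct (continuity_ab_maj (fun x => Rabs (g (clamp x))) 0 1 ltac:(lra)) as [M [HM _]].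
 - intros c Hc. unfold continuity_pt, continue_in, limit1_in, limit_in. simpl. unfold Rdist.
   intros eps He. destruct (Hg c Hc eps He) as [del [Hd Hdel]]. exists del; split; auto.
   intros x [_ Hx]. destruct (clamp_prop x) as [Hx01 Hxc].
   assert (clamp c = c) by (unfold clamp, Rmax, Rmin; dd; lra). rewrite H.
   eapply Rle_lt_trans; [apply Rabs_triang_inv2|].
   apply Hdel; auto. eapply Rle_lt_trans; [apply Hxc; auto|]. auto.
 - exists (Rabs (g (clamp M))). split. apply Rabs_pos. intros t Ht. specialize (HM t Ht).
   assert (clamp t = t) by (unfold clamp, Rmax, Rmin; dd; lra). rewrite H in HM. auto.
Qed.

Lemma finmax n (P : nat -> R -> Prop) : (forall i B B', P i B -> B <= B' -> P i B') ->
  (forall i, (i < n)%nat -> exists B, 0 <= B /\ P i B) -> exists B, 0 <= B /\ forall i, (i < n)%nat -> P i B.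
Proof. intros Hm. induction n; intros H.
 - exists 0. split; [lra|]. intros; lia.
 - destruct IHn as [B1 [HB1 F1]]. intros; apply H; lia.
   destruct (H n ltac:(lia)) as [B2 [HB2 F2]]. exists (Rmax B1 B2). split.
   eapply Rle_trans; [apply HB1|apply Rmax_l].
   intros i Hi. destruct (Nat.eq_dec i n) as [->|].
   + apply (Hm _ B2); auto. apply Rmax_r.
   + apply (Hm _ B1); auto. apply F1; lia. apply Rmax_l.
Qed.

Lemma bounded_mat n d v : cont01m n d v -> exists B, 0 <= B /\
  forall i j t, (i < n)%nat -> (j < d)%nat -> 0 <= t <= 1 -> Rabs (v t i j) <= B.
Proof. intros Hv.
 destruct (finmax n (fun i B => forall j t, (j < d)%nat -> 0 <= t <= 1 -> Rabs (v t i j) <= B)) as [B [HB F]].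
 - intros i B B' H1 H2 j t Hj Ht. specialize (H1 j t Hj Ht); lra.
 - intros i Hi. destruct (finmax d (fun j B => forall t, 0 <= t <= 1 -> Rabs (v t i j) <= B)) as [B [HB F]].
   + intros j B B' H1 H2 t Ht; specialize (H1 t Ht); lra.
   + intros j Hj. apply (bounded01 (fun s => v s i j)). apply Hv; auto.
   + exists B; split; auto.
 - exists B; split; auto.
Qed.

Lemma lim_bound u l N a e : Un_cv u l -> (forall M, (N <= M)%nat -> Rabs (u M - a) <= e) -> Rabs (l - a) <= e.
Proof. intros Hu H. destruct (Rle_dec (Rabs (l - a)) e) as [|Hn]; auto. exfalso.
 apply Rnot_le_lt in Hn. destruct (Hu (Rabs (l - a) - e) ltac:(lra)) as [N1 HN1].
 specialize (HN1 (max N N1) ltac:(lia)). specialize (H (max N N1) ltac:(lia)). unfold Rdist in HN1.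
 assert (Rabs (l - a) <= Rabs (u (max N N1) - l) + Rabs (u (max N N1) - a)).
 { replace (l - a) with (-(u (max N N1) - l) + (u (max N N1) - a)) by ring.
   eapply Rle_trans; [apply Rabs_triang|]. rewrite Rabs_Ropp; lra. }
 lra. Qed.

Lemma geo_tail (f : nat -> R) K x : 0 <= K -> 0 <= x < 1 -> (forall p, (1 <= p)%nat -> Rabs (f p) <= K * x ^ p) ->
  forall N M, (1 <= N)%nat -> (N <= M)%nat -> Rabs (rsum M f - rsum N f) <= K * (x ^ N - x ^ M) / (1 - x).
Proof. intros HK Hx Hf N M HN HM. induction HM.
 - replace (rsum N f - rsum N f) with 0 by ring. rewrite Rabs_R0. unfold Rdiv. replace (x^N - x^N) with 0 by ring.
   rewrite Rmult_0_r, Rmult_0_l. lra.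
 - simpl. replace (rsum m f + f m - rsum N f) with ((rsum m f - rsum N f) + f m) by ring.
   eapply Rle_trans; [apply Rabs_triang|]. specialize (Hf m ltac:(lia)).
   replace (K * (x ^ N - x * x ^ m) / (1 - x)) with (K * (x ^ N - x ^ m) / (1 - x) + K * x ^ m) by (field; lra).
   lra.
Qed.

Lemma geo_sum c p : 1 < c -> rsum p (fun q => c ^ q) <= c ^ p / (c - 1).
Proof. intros Hc. induction p; simpl.
 - apply Rlt_le, Rdiv_lt_0_compat; lra.
 - replace (c * c ^ p / (c - 1)) with (c ^ p / (c - 1) + c ^ p) by (field; lra). lra. Qed.

Lemma rsum_const n c : rsum n (fun _ => c) = INR n * c.
Proof. induction n; simpl. ring. rewrite IHn. destruct n; simpl; ring. Qed.

Definition term d (v : R -> nat -> nat -> R) (w : R -> nat -> R) (p : nat) (t : R) (i : nat) :=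
  rsum d (fun j => Sprev (fun s => v s i j) p t * Delta (fun s => w s j) p t).

Lemma partial_term d v w N t i : para_partial d v w N t i = rsum (S N) (fun p => term d v w p t i).
Proof. reflexivity. Qed.

Definition flim d v w (t : R) (i : nat) : R :=
  epsilon (inhabits 0) (fun l => Un_cv (fun N => para_partial d v w N t i) l).

Lemma pow_decr x N M : 0 <= x <= 1 -> (N <= M)%nat -> x ^ M <= x ^ N.
Proof. intros Hx H. induction H. lra. simpl. pose proof (pow_le x m (proj1 Hx)). nra. Qed.

Lemma conv_tail d v w t i K x : 0 <= K -> 0 <= x < 1 ->
  (forall p, (1 <= p)%nat -> Rabs (term d v w p t i) <= K * x ^ p) ->
  forall N, Rabs (para_partial d v w N t i - flim d v w t i) <= K * x ^ (S N) / (1 - x).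
Proof. intros HK Hx Hb.
 set (u := fun N => para_partial d v w N t i).
 assert (Ht : forall N M, (N <= M)%nat -> Rabs (u M - u N) <= K * x ^ (S N) / (1 - x)).
 { intros N M HNM. unfold u. rewrite !partial_term.
   eapply Rle_trans. apply (geo_tail _ K x HK Hx Hb (S N) (S M)); lia.
   unfold Rdiv. apply Rmult_le_compat_r. left; apply Rinv_0_lt_compat; lra.
   pose proof (pow_le x (S M) (proj1 Hx)). nra. }
 assert (Hc : Cauchy_crit u).
 { intros eps He. assert (Hx' : Rabs x < 1) by (rewrite Rabs_right; lra).
   destruct (pow_lt_1_zero x Hx' (eps * (1 - x) / (2 * (K + 1)))) as [N0 HN0].
   { apply Rdiv_lt_0_compat; nra. }
   exists N0. intros a b Ha Hb'. unfold Rdist.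
   specialize (HN0 N0 (le_n _)). rewrite Rabs_right in HN0 by (apply Rle_ge, pow_le; lra).
   assert (E1 : K * x ^ S N0 / (1 - x) < eps / 2).
   { assert (x ^ S N0 <= x ^ N0) by (apply pow_decr; [lra|lia]).
     apply Rmult_lt_reg_r with (1 - x). lra. unfold Rdiv. rewrite Rmult_assoc, Rinv_l, Rmult_1_r by lra.
     assert (K * x ^ N0 < eps * (1 - x) / 2).
     { apply Rle_lt_trans with ((K + 1) * x ^ N0). pose proof (pow_le x N0 (proj1 Hx)); nra.
       apply Rmult_lt_reg_r with (/ (K + 1)). apply Rinv_0_lt_compat; lra.
       replace ((K + 1) * x ^ N0 * / (K + 1)) with (x ^ N0) by (field; lra).
       replace (eps * (1 - x) / 2 * / (K + 1)) with (eps * (1 - x) / (2 * (K + 1))) by (field; lra). auto. }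
     pose proof (pow_le x N0 (proj1 Hx)). nra. }

   pose proof (Ht N0 a Ha) as H1. pose proof (Ht N0 b Hb') as H2.
   replace (u a - u b) with ((u a - u N0) - (u b - u N0)) by ring.
   eapply Rle_lt_trans; [apply Rabs_triang|]. rewrite Rabs_Ropp. lra. }
 destruct (R_complete u Hc) as [l Hl].
 assert (Hf : Un_cv u (flim d v w t i)).
 { unfold flim. apply epsilon_spec. exists l; auto. }
 intros N. rewrite <- Rabs_Ropp. replace (- (para_partial d v w N t i - flim d v w t i)) with (flim d v w t i - u N) by (unfold u; ring).
 apply (lim_bound u _ N); auto.
Qed.

Lemma rr_bounds beta : 0 < beta < 2 -> 1 < Rpower 2 beta < 4.
Proof. intros Hb. split.
 - rewrite <- (Rpower_O 2) at 1 by lra. apply Rpower_lt; lra.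
 - replace 4 with (Rpower 2 (INR 2)). apply Rpower_lt; simpl; lra.
   rewrite Rpower_pow by lra. simpl; ring. Qed.

Lemma rr_pow beta p : Rpower 2 (INR p * beta) = Rpower 2 beta ^ p.
Proof. rewrite Rmult_comm, <- Rpower_mult, Rpower_pow; auto. apply exp_pos. Qed.

Lemma HB_coef beta d w W : HolderBound beta d w W -> forall p k j, (k < Nat.pow 2 p)%nat -> (j < d)%nat ->
  Rabs (coef (fun s => w s j) p (S k)) <= W * (/ Rpower 2 beta) ^ p.
Proof. intros [_ [_ H]] p k j Hk Hj. specialize (H p (S k) ltac:(lia) ltac:(lia)).
 rewrite rr_pow in H. pose proof (exp_pos (beta * ln 2)) as Hr. fold (Rpower 2 beta) in Hr.
 pose proof (pow_lt _ p Hr).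
 pose proof (vnorm_ge d (fun i => coef (fun s => w s i) p (S k)) j Hj). simpl in H1.
 rewrite pow_inv. apply Rmult_le_reg_l with (Rpower 2 beta ^ p); auto.
 replace (Rpower 2 beta ^ p * (W * / Rpower 2 beta ^ p)) with W by (field; lra). nra. Qed.

Lemma HB_W beta d w W : HolderBound beta d w W -> 0 <= W.
Proof. intros [_ [H _]]. pose proof (vnorm_nonneg d (fun i => w 1 i - w 0 i)). lra. Qed.

Lemma Sprev_sum_bound d (v : R -> nat -> nat -> R) i q t V : 0 <= t <= 1 ->
  (forall s, 0 <= s <= 1 -> rsum d (fun j => Rabs (v s i j)) <= V) ->
  rsum d (fun j => Rabs (Sprev (fun s => v s i j) q t)) <= V.
Proof. intros Ht HV. destruct (Sprev_conv q t Ht) as [a [b [l [Ha [Hb [Hl E]]]]]].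
 apply Rle_trans with (rsum d (fun j => (1 - l) * Rabs (v a i j) + l * Rabs (v b i j))).
 - apply rsum_le. intros j _. rewrite E. eapply Rle_trans; [apply Rabs_triang|].
   rewrite !Rabs_mult, (Rabs_right (1 - l)), (Rabs_right l) by lra. lra.
 - rewrite rsum_plus, !rsum_scal. pose proof (HV a Ha). pose proof (HV b Hb). nra. Qed.

Lemma term_bound beta d (v : R -> nat -> nat -> R) w B Mw t i : 0 <= t <= 1 ->
  HolderBound beta d w Mw -> (forall j s, (j < d)%nat -> 0 <= s <= 1 -> Rabs (v s i j) <= B) ->
  forall p, (1 <= p)%nat -> Rabs (term d v w p t i) <= (INR d * B * Mw / 2) * (/ Rpower 2 beta) ^ p.
Proof. intros Ht HB HvB p Hp. destruct p as [|q]; [lia|].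
 destruct (Delta_bound q t Ht) as [k [Hk Hd]].
 unfold term. eapply Rle_trans. apply (rsum_prod_bound d _ _ (Mw * (/ Rpower 2 beta) ^ S q / 2)).
 - intros j Hj. eapply Rle_trans; [apply Hd|]. pose proof (HB_coef _ _ _ _ HB (S q) k j Hk Hj). lra.
 - assert (rsum d (fun j => Rabs (Sprev (fun s => v s i j) (S q) t)) <= INR d * B).
   { rewrite <- rsum_const. apply Sprev_sum_bound; auto. intros s Hs. apply rsum_le. intros; apply HvB; auto. }
   pose proof (HB_W _ _ _ _ HB). pose proof (pow_le (/ Rpower 2 beta) (S q)).
   assert (0 <= / Rpower 2 beta) by (left; apply Rinv_0_lt_compat, exp_pos).
   assert (0 <= Mw * (/ Rpower 2 beta) ^ S q / 2) by (apply Rmult_le_pos; [apply Rmult_le_pos; auto| lra]).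
   set (X := (/ Rpower 2 beta) ^ S q) in *. replace (INR d * B * Mw / 2 * X) with (INR d * B * (Mw * X / 2)) by (unfold X; field).
   apply Rmult_le_compat_r; auto.
Qed.

Lemma grid_scale a e t K : t * 2 ^ a = INR K -> t * 2 ^ (a + e) = INR (K * Nat.pow 2 e).
Proof. intros H. rewrite pow_add, mult_INR, INR_pow2, <- H. ring. Qed.

Lemma term_grid d v w t i p K q : 0 <= t <= 1 -> t * 2 ^ (S p) = INR K -> (S p <= q)%nat ->
  term d v w q t i = 0.
Proof. intros Ht HK Hq. unfold term. apply rsum_zero. intros j _.
 replace q with (S (p + (q - S p))) by lia.
 rewrite (Delta_grid _ (p + (q - S p)) t (K * Nat.pow 2 (q - S p))); [ring|auto|].
 replace (S (p + (q - S p))) with (S p + (q - S p))%nat by lia. apply grid_scale; auto. Qed.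

Lemma partial_grid d v w t i p K N : 0 <= t <= 1 -> t * 2 ^ (S p) = INR K -> (p <= N)%nat ->
  para_partial d v w N t i = para_partial d v w p t i.
Proof. intros Ht HK HN. rewrite !partial_term.
 replace (S N) with (S p + (N - p))%nat by lia. rewrite rsum_split.
 rewrite (rsum_zero (N - p)); [ring|]. intros k _. apply (term_grid d v w t i p K); auto; lia. Qed.

Lemma small_zero a c x p : 0 <= c -> 0 <= x < 1 -> (forall N, (p <= N)%nat -> Rabs a <= c * x ^ N) -> a = 0.
Proof. intros Hc Hx H. destruct (Req_dec a 0) as [|Hn]; auto. exfalso.
 assert (Ha : 0 < Rabs a) by (apply Rabs_pos_lt; auto).
 assert (Hx' : Rabs x < 1) by (rewrite Rabs_right; lra).
 destruct (pow_lt_1_zero x Hx' (Rabs a / (c + 1))) as [N0 HN0]. apply Rdiv_lt_0_compat; lra.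
 specialize (HN0 (max p N0) ltac:(lia)). specialize (H (max p N0) ltac:(lia)).
 rewrite Rabs_right in HN0 by (apply Rle_ge, pow_le; lra).
 assert ((c + 1) * x ^ max p N0 < Rabs a).
 { apply Rmult_lt_reg_r with (/ (c + 1)). apply Rinv_0_lt_compat; lra.
   replace ((c + 1) * x ^ max p N0 * / (c + 1)) with (x ^ max p N0) by (field; lra). auto. }
 pose proof (pow_le x (max p N0) (proj1 Hx)). nra. Qed.


Lemma flim_grid d v w t i p K Kb x : 0 <= Kb -> 0 <= x < 1 ->
  (forall q, (1 <= q)%nat -> Rabs (term d v w q t i) <= Kb * x ^ q) ->
  0 <= t <= 1 -> t * 2 ^ (S p) = INR K -> flim d v w t i = para_partial d v w p t i.
Proof. intros HK Hx Hb Ht HtK.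
 assert (flim d v w t i - para_partial d v w p t i = 0); [|lra].
 apply (small_zero _ (Kb * x / (1 - x)) x p).
 - apply Rmult_le_pos. apply Rmult_le_pos; lra. left; apply Rinv_0_lt_compat; lra.
 - auto.
 - intros N HN. rewrite <- (partial_grid d v w t i p K N) by auto.
   rewrite <- Rabs_Ropp. replace (- (flim d v w t i - para_partial d v w N t i)) with (para_partial d v w N t i - flim d v w t i) by ring.
   eapply Rle_trans. apply (conv_tail d v w t i Kb x HK Hx Hb N). simpl. right; field; lra.
Qed.

Lemma unif_conv d n v w Kb x : 0 <= Kb -> 0 <= x < 1 ->
  (forall t i, 0 <= t <= 1 -> (i < n)%nat -> forall q, (1 <= q)%nat -> Rabs (term d v w q t i) <= Kb * x ^ q) ->
  forall eps, 0 < eps -> exists N0 : nat, forall N : nat, (N0 <= N)%nat ->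
         forall t, 0 <= t <= 1 ->
           vnorm n (fun i => para_partial d v w N t i - flim d v w t i) < eps.
Proof. intros HK Hx Hb eps He.
 assert (Hx' : Rabs x < 1) by (rewrite Rabs_right; lra).
 destruct (pow_lt_1_zero x Hx' (eps * (1 - x) / (Kb + 1))) as [N0 HN0]. apply Rdiv_lt_0_compat; nra.
 exists N0. intros N HN t Ht. apply rmaxn_lt; auto. intros i Hi.
 eapply Rle_lt_trans. apply (conv_tail d v w t i Kb x HK Hx (Hb t i Ht Hi) N).
 specialize (HN0 N0 (le_n _)). rewrite Rabs_right in HN0 by (apply Rle_ge, pow_le; lra).
 assert (x ^ S N <= x ^ N0) by (apply pow_decr; [lra|lia]).
 assert ((Kb + 1) * x ^ N0 < eps * (1 - x)).
 { apply Rmult_lt_reg_r with (/ (Kb + 1)). apply Rinv_0_lt_compat; lra.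
   replace ((Kb + 1) * x ^ N0 * / (Kb + 1)) with (x ^ N0) by (field; lra).
   replace (eps * (1 - x) * / (Kb + 1)) with (eps * (1 - x) / (Kb + 1)) by (field; lra). auto. }
 apply Rmult_lt_reg_r with (1 - x). lra. unfold Rdiv. rewrite Rmult_assoc, Rinv_l, Rmult_1_r by lra.
 pose proof (pow_le x (S N) (proj1 Hx)). pose proof (pow_le x N0 (proj1 Hx)). nra. Qed.

Lemma flim_cont d n v w Kb x : 0 <= Kb -> 0 <= x < 1 ->
  (forall t i, 0 <= t <= 1 -> (i < n)%nat -> forall q, (1 <= q)%nat -> Rabs (term d v w q t i) <= Kb * x ^ q) ->
  cont01v n (flim d v w).
Proof. intros HK Hx Hb i Hi t Ht eps He.
 destruct (unif_conv d n v w Kb x HK Hx Hb (eps / 3) ltac:(lra)) as [N HN].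
 specialize (HN N (le_n _)).
 destruct (Lip01_cont _ (partial_Lip01 d v w N i) t Ht (eps / 3) ltac:(lra)) as [del [Hd Hdel]].
 exists del; split; auto. intros s Hs Hst.
 pose proof (HN s Hs) as H1. pose proof (HN t Ht) as H2.
 pose proof (vnorm_ge n (fun i => para_partial d v w N s i - flim d v w s i) i Hi) as G1.
 pose proof (vnorm_ge n (fun i => para_partial d v w N t i - flim d v w t i) i Hi) as G2.
 simpl in G1, G2. specialize (Hdel s Hs Hst). simpl in Hdel.
 replace (flim d v w s i - flim d v w t i) with
   (-(para_partial d v w N s i - flim d v w s i) + (para_partial d v w N s i - para_partial d v w N t i)
    + (para_partial d v w N t i - flim d v w t i)) by ring.
 eapply Rle_lt_trans. apply Rabs_triang. eapply Rle_lt_trans. apply Rplus_le_compat_r. apply Rabs_triang.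
 rewrite Rabs_Ropp. lra. Qed.

Lemma In_01 q k t : (k < Nat.pow 2 q)%nat -> In q k t -> 0 <= t <= 1.
Proof. intros Hk Hi. unfold In in Hi. pose proof (pow2_pos q).
 assert (INR (S k) <= INR (Nat.pow 2 q)) by (apply le_INR; lia).
 rewrite S_INR, INR_pow2 in H0. pose proof (pos_INR k). split; nra. Qed.

Lemma pow4 q y : 2 ^ q * 2 ^ q * y ^ q = (4 * y) ^ q.
Proof. induction q; simpl. ring. rewrite <- IHq. ring. Qed.

Lemma low_q d n (v : R -> nat -> nat -> R) w V W y p q k i : (q < p)%nat -> (k < Nat.pow 2 p)%nat -> (i < n)%nat ->
  0 <= V -> 0 <= W -> 0 <= y ->
  (forall s, 0 <= s <= 1 -> rsum d (fun j => Rabs (v s i j)) <= V) ->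
  (forall q k j, (k < Nat.pow 2 q)%nat -> (j < d)%nat -> Rabs (coef (fun s => w s j) q (S k)) <= W * y ^ q) ->
  Rabs (rsum d (fun j => coef (fun s => Sprev (fun s => v s i j) q s * Delta (fun s => w s j) q s) p (S k)))
   <= V * W * (4 * y) ^ q / (2 ^ p * 2 ^ p).
Proof. intros Hqp Hk Hi HV HW Hy HVs HWc.
 destruct (contain (p - S q) (S q) k) as [k2 [Hk2 Hc]].
 { replace (S q + (p - S q))%nat with p by lia. exact Hk. }
 replace (S q + (p - S q))%nat with p in Hc by lia.
 destruct (Delta_affine q k2 Hk2) as [k' [sg [Hk' [Hsg [HI HD]]]]].
 destruct (Sprev_affine q k' Hk') as [a' [b' [Ha' [Hb' HS]]]].
 set (h := / 2 ^ S p).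
 assert (E : forall j, coef (fun s => Sprev (fun s => v s i j) q s * Delta (fun s => w s j) q s) p (S k) =
    - 2 * (if Nat.eqb q 0 then 0 else 2 ^ q * (v b' i j - v a' i j)) *
    ((if Nat.eqb q 0 then w 1 j - w 0 j else 0) + sg * 2 ^ q * coef (fun s => w s j) q (S k')) * h ^ 2).
 { intros j. destruct (HS (fun s => v s i j)) as [al1 H1]. destruct (HD (fun s => w s j)) as [al2 H2].
   apply (coef_affprod p k _ _ al1 _ al2 _); intros t Ht; [apply H1, HI, Hc | apply H2, Hc]; auto. }
 rewrite (rsum_ext d _ _ (fun j _ => E j)).
 assert (Hden : 0 < 2 ^ p * 2 ^ p) by (pose proof (pow2_pos p); nra).
 assert (Hb0 : 0 <= V * W * (4 * y) ^ q / (2 ^ p * 2 ^ p)).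
 { apply Rmult_le_pos; [| left; apply Rinv_0_lt_compat; auto].
   apply Rmult_le_pos; [nra| apply pow_le; lra]. }
 destruct q as [|q'].
 - simpl Nat.eqb; cbv iota. rewrite rsum_zero. rewrite Rabs_R0. auto. intros; ring.
 - change (Nat.eqb (S q') 0) with false; cbv iota.
   set (q := S q') in *.
   rewrite (rsum_ext d _ (fun j => (- 2 * h ^ 2 * (2 ^ q * (v b' i j - v a' i j))) * (sg * 2 ^ q * coef (fun s => w s j) q (S k'))))
     by (intros; ring).
   eapply Rle_trans. apply (rsum_prod_bound d _ _ (2 ^ q * (W * y ^ q))).
   { intros j Hj. rewrite !Rabs_mult, Hsg, (Rabs_right (2^q)) by (apply Rle_ge, pow_le; lra).
     pose proof (HWc q k' j Hk' Hj). pose proof (pow2_pos q). nra. }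
   assert (HA : rsum d (fun j => Rabs (- 2 * h ^ 2 * (2 ^ q * (v b' i j - v a' i j)))) <= 2 * h ^ 2 * 2 ^ q * (2 * V)).
   { apply Rle_trans with (rsum d (fun j => 2 * h ^ 2 * 2 ^ q * (Rabs (v b' i j) + Rabs (v a' i j)))).
     - apply rsum_le. intros j _. rewrite !Rabs_mult.
       assert (A1 : Rabs (-2) = 2) by (unfold Rabs; destruct Rcase_abs; lra).
       assert (A2 : Rabs (h^2) = h^2) by (apply Rabs_right, Rle_ge, pow2_ge_0).
       assert (A3 : Rabs (2^q) = 2^q) by (apply Rabs_right, Rle_ge, Rlt_le, pow2_pos).
       rewrite A1, A2, A3.
       assert (Rabs (v b' i j - v a' i j) <= Rabs (v b' i j) + Rabs (v a' i j)) by (unfold Rabs; repeat destruct Rcase_abs; lra).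
       assert (0 <= 2 * h ^ 2 * 2 ^ q) by (pose proof (pow2_ge_0 h); pose proof (pow2_pos q); nra).
       rewrite <- Rmult_assoc. apply Rmult_le_compat_l; auto.
     - rewrite rsum_scal, rsum_plus. pose proof (HVs b' Hb'). pose proof (HVs a' Ha').
       assert (0 <= 2 * h ^ 2 * 2 ^ q) by (pose proof (pow2_ge_0 h); pose proof (pow2_pos q); nra). apply Rmult_le_compat_l; lra. }
   assert (0 <= 2 ^ q * (W * y ^ q)) by (apply Rmult_le_pos; [left; apply pow2_pos| apply Rmult_le_pos; [auto| apply pow_le; auto]]).
   eapply Rle_trans. apply Rmult_le_compat_r; [auto| exact HA].
   rewrite <- pow4. unfold h. simpl pow. right. field. apply pow_nonzero; lra.
Qed.

Lemma top_q d n (v : R -> nat -> nat -> R) w V W y p k i : (k < Nat.pow 2 p)%nat -> (i < n)%nat ->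
  0 <= V -> 0 <= W -> 0 <= y ->
  (forall s, 0 <= s <= 1 -> rsum d (fun j => Rabs (v s i j)) <= V) ->
  (forall q k j, (k < Nat.pow 2 q)%nat -> (j < d)%nat -> Rabs (coef (fun s => w s j) q (S k)) <= W * y ^ q) ->
  Rabs (rsum d (fun j => coef (fun s => Sprev (fun s => v s i j) p s * Delta (fun s => w s j) p s) p (S k)))
   <= V * (W * y ^ p).
Proof. intros Hk Hi HV HW Hy HVs HWc. destruct p as [|p'].
 - simpl in Hk. assert (k = 0)%nat by lia. subst k.
   rewrite (rsum_ext d _ (fun j => v 0 i j * coef (fun s => w s j) 0 1)).
   2:{ intros j _. apply (coef_top0 (v 0 i j) (fun s => w s j)). }
   eapply Rle_trans. apply (rsum_prod_bound d _ _ (W * y ^ 0)).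
   intros j Hj. apply (HWc 0%nat 0%nat j); auto.
   apply Rmult_le_compat_r. simpl; lra. apply HVs; lra.
 - rewrite (rsum_ext d _ (fun j => Sprev (fun s => v s i j) (S p') (tt1 (S p') (S k)) * coef (fun s => w s j) (S p') (S k))).
   2:{ intros j _. apply coef_top; auto. }
   eapply Rle_trans. apply (rsum_prod_bound d _ _ (W * y ^ S p')).
   intros j Hj. apply HWc; auto.
   apply Rmult_le_compat_r. apply Rmult_le_pos; auto; apply pow_le; auto.
   apply Sprev_sum_bound; auto. destruct (In_tt (S p') k) as [_ [I1 _]]. apply (In_01 _ _ _ Hk I1).
Qed.

Lemma tt_grid p k : tt0 p (S k) * 2 ^ S p = INR (2 * k) /\ tt1 p (S k) * 2 ^ S p = INR (2 * k + 1)
  /\ tt2 p (S k) * 2 ^ S p = INR (2 * k + 2).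
Proof. assert (I2 : INR 2 = 2) by (simpl; lra). rewrite !plus_INR, !mult_INR, I2, INR_1.
 change (2 ^ S p) with (2 * 2 ^ p). pose proof (tt0S p k). pose proof (tt1S p k). pose proof (tt2S p k).
 repeat split; nra. Qed.

Lemma coef_f d n v w V W y Kb x p k i : (k < Nat.pow 2 p)%nat -> (i < n)%nat ->
  0 <= V -> 0 <= W -> 0 <= y -> 1 < 4 * y -> 0 <= Kb -> 0 <= x < 1 ->
  (forall t i, 0 <= t <= 1 -> (i < n)%nat -> forall q, (1 <= q)%nat -> Rabs (term d v w q t i) <= Kb * x ^ q) ->
  (forall s, 0 <= s <= 1 -> rsum d (fun j => Rabs (v s i j)) <= V) ->
  (forall q k j, (k < Nat.pow 2 q)%nat -> (j < d)%nat -> Rabs (coef (fun s => w s j) q (S k)) <= W * y ^ q) ->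
  Rabs (coef (fun s => flim d v w s i) p (S k)) <= V * W * y ^ p * (1 + 1 / (4 * y - 1)).
Proof. intros Hk Hi HV HW Hy Hy4 HK Hx Hb HVs HWc.
 destruct (In_tt p k) as [I0 [I1 I2]]. destruct (tt_grid p k) as [G0 [G1 G2]].
 assert (E : coef (fun s => flim d v w s i) p (S k) = coef (fun s => para_partial d v w p s i) p (S k)).
 { unfold coef. rewrite (flim_grid d v w _ i p _ Kb x HK Hx (Hb _ i (In_01 _ _ _ Hk I0) Hi) (In_01 _ _ _ Hk I0) G0).
   rewrite (flim_grid d v w _ i p _ Kb x HK Hx (Hb _ i (In_01 _ _ _ Hk I1) Hi) (In_01 _ _ _ Hk I1) G1).
   rewrite (flim_grid d v w _ i p _ Kb x HK Hx (Hb _ i (In_01 _ _ _ Hk I2) Hi) (In_01 _ _ _ Hk I2) G2). auto. }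
 rewrite E. clear E.
 assert (E : coef (fun s => para_partial d v w p s i) p (S k) = rsum (S p) (fun q =>
    rsum d (fun j => coef (fun s => Sprev (fun s => v s i j) q s * Delta (fun s => w s j) q s) p (S k)))).
 { unfold para_partial. rewrite (coef_rsum (S p) (fun q s => rsum d (fun j => Sprev (fun s => v s i j) q s * Delta (fun s => w s j) q s))).
   apply rsum_ext. intros q _.
   apply (coef_rsum d (fun j s => Sprev (fun s => v s i j) q s * Delta (fun s => w s j) q s)). }
 rewrite E. clear E. simpl rsum.
 eapply Rle_trans. apply Rabs_triang.
 pose proof (top_q d n v w V W y p k i Hk Hi HV HW Hy HVs HWc) as T.
 assert (L : Rabs (rsum p (fun q => rsum d (fun j => coef (fun s => Sprev (fun s => v s i j) q s * Delta (fun s => w s j) q s) p (S k))))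
   <= V * W * y ^ p / (4 * y - 1)).
 { eapply Rle_trans. apply rsum_abs.
   eapply Rle_trans. apply (rsum_le p _ (fun q => (V * W / (2 ^ p * 2 ^ p)) * (4 * y) ^ q)).
   { intros q Hq. eapply Rle_trans. apply (low_q d n v w V W y p q k i); auto. right; field.
     pose proof (pow2_pos p). nra. }
   rewrite rsum_scal. assert (0 < 2 ^ p * 2 ^ p) by (pose proof (pow2_pos p); nra).
   assert (0 <= V * W / (2 ^ p * 2 ^ p)) by (apply Rmult_le_pos; [nra| left; apply Rinv_0_lt_compat; auto]).
   eapply Rle_trans. apply Rmult_le_compat_l; auto. apply geo_sum; auto.
   rewrite <- pow4. right. field. split; [lra| apply pow_nonzero; lra]. }
 assert (V * W * y ^ p / (4 * y - 1) + V * (W * y ^ p) = V * W * y ^ p * (1 + 1 / (4 * y - 1))) by (field; lra).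
 lra.
Qed.

Lemma Delta00 (g : R -> R) : Delta g 0 0 = 0.
Proof. rewrite Delta_R, (R_loc g 0 0 0) by (unfold In; simpl; try lia; lra). simpl Nat.eqb; cbv iota.
 rewrite psi_le; simpl; lra. Qed.

Lemma Delta01 (g : R -> R) : Delta g 0 1 = g 1 - g 0.
Proof. rewrite Delta_R, (R_loc g 0 0 1) by (unfold In; simpl; try lia; lra). simpl Nat.eqb; cbv iota.
 rewrite psi_ge; simpl; lra. Qed.

Lemma pp0 d (v : R -> nat -> nat -> R) w t i : para_partial d v w 0 t i = rsum d (fun j => v 0 i j * Delta (fun s => w s j) 0 t).
Proof. unfold para_partial. simpl. rewrite Rplus_0_l. reflexivity. Qed.

Theorem mainTheorem2 :
  forall (beta : R) (d n : nat), 0 < beta < 2 ->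
  exists C : R, 0 <= C /\
  forall (v : R -> nat -> nat -> R) (w : R -> nat -> R),
    cont01m n d v ->
    cont01v d w ->
    (exists Mw, HolderBound beta d w Mw) ->
    exists f : R -> nat -> R,
      (* uniform convergence on [0,1] of the partial sums to f = pi_<(v,w) *)
      (forall eps, 0 < eps -> exists N0 : nat, forall N : nat, (N0 <= N)%nat ->
         forall t, 0 <= t <= 1 ->
           vnorm n (fun i => para_partial d v w N t i - f t i) < eps) /\
      (* f in C^beta(R^n) *)
      cont01v n f /\
      (exists Mf, HolderBound beta n f Mf) /\
      (* ||f||_beta <= C ||v||_infty ||w||_beta *)
      (forall V W : R,
         (forall t, 0 <= t <= 1 -> mnorm n d (v t) <= V) ->
         HolderBound beta d w W ->
         HolderBound beta n f (C * V * W)).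
Proof.
 intros beta d n Hbeta.
 pose proof (rr_bounds beta Hbeta) as Hr.
 set (r := Rpower 2 beta) in *. set (y := / r).
 assert (Hy0 : 0 < y) by (apply Rinv_0_lt_compat; lra).
 assert (Hy1 : y < 1) by (unfold y; rewrite <- Rinv_1; apply Rinv_lt_contravar; lra).
 assert (Hy4 : 1 < 4 * y).
 { unfold y. apply Rmult_lt_reg_r with r. lra. rewrite Rmult_assoc, Rinv_l by lra. lra. }
 set (C := 1 + 1 / (4 * y - 1)).
 assert (HC : 1 <= C) by (unfold C; assert (0 < 1 / (4 * y - 1)) by (apply Rdiv_lt_0_compat; lra); lra).
 exists C. split; [lra|].
 intros v w Hv Hw [Mw HMw].
 destruct (bounded_mat n d v Hv) as [B [HB HvB]].
 assert (HMw0 : 0 <= Mw) by (apply (HB_W beta d w); auto).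
 set (Kb := INR d * B * Mw / 2).
 assert (HKb : 0 <= Kb) by (unfold Kb; pose proof (pos_INR d); apply Rmult_le_pos; [|lra];
   apply Rmult_le_pos; auto; apply Rmult_le_pos; auto).
 assert (Hbnd : forall t i, 0 <= t <= 1 -> (i < n)%nat -> forall q, (1 <= q)%nat ->
    Rabs (term d v w q t i) <= Kb * y ^ q).
 { intros t i Ht Hi q Hq. apply (term_bound beta d v w B Mw t i Ht HMw); auto.
   }
 assert (Hx : 0 <= y < 1) by lra.
 assert (HG : forall V W : R, (forall t, 0 <= t <= 1 -> mnorm n d (v t) <= V) ->
         HolderBound beta d w W -> HolderBound beta n (flim d v w) (C * V * W)).
 { intros V W HV HW.
   assert (HV0 : 0 <= V) by (pose proof (mnorm_nonneg n d (v 0)); pose proof (HV 0 ltac:(lra)); lra).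
   assert (HW0 : 0 <= W) by (apply (HB_W beta d w); auto).
   assert (HVs : forall i, (i < n)%nat -> forall s, 0 <= s <= 1 -> rsum d (fun j => Rabs (v s i j)) <= V).
   { intros i Hi s Hs. eapply Rle_trans. apply (mnorm_row n d (v s) i Hi). auto. }
   assert (HWc : forall q k j, (k < Nat.pow 2 q)%nat -> (j < d)%nat -> Rabs (coef (fun s => w s j) q (S k)) <= W * y ^ q).
   { intros q k j Hk Hj. apply (HB_coef beta d w W HW q k j Hk Hj). }
   assert (HCVW : 0 <= C * V * W) by (apply Rmult_le_pos; auto; apply Rmult_le_pos; lra).
   assert (F0 : forall i, (i < n)%nat -> flim d v w 0 i = 0).
   { intros i Hi. rewrite (flim_grid d v w 0 i 0 0 Kb y HKb Hx (Hbnd 0 i ltac:(lra) Hi)) by (simpl; lra).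
     rewrite pp0. apply rsum_zero. intros j _. rewrite Delta00. ring. }
   assert (F1 : forall i, (i < n)%nat -> flim d v w 1 i = rsum d (fun j => v 0 i j * (w 1 j - w 0 j))).
   { intros i Hi. rewrite (flim_grid d v w 1 i 0 2 Kb y HKb Hx (Hbnd 1 i ltac:(lra) Hi)) by (simpl; lra).
     rewrite pp0. apply rsum_ext. intros j _. rewrite Delta01. ring. }
   split; [|split].
   - apply Rle_trans with 0; auto.
     assert (vnorm n (flim d v w 0) <= 0).
     { apply rmaxn_lub; [lra|]. intros i Hi. rewrite F0 by auto. rewrite Rabs_R0; lra. }
     pose proof (vnorm_nonneg n (flim d v w 0)). assert (vnorm n (flim d v w 0) = 0) by lra.
     rewrite H1. lra.
   - apply rmaxn_lub; auto. intros i Hi. rewrite F0, F1 by auto. rewrite Rminus_0_r.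
     eapply Rle_trans. apply (rsum_prod_bound d _ _ W).
     + intros j Hj. destruct HW as [_ [HW2 _]].
       eapply Rle_trans; [apply (vnorm_ge d (fun i => w 1 i - w 0 i) j Hj)|]. auto.
     + pose proof (HVs i Hi 0 ltac:(lra)). apply Rle_trans with (V * W). nra.
       replace (C * V * W) with (C * (V * W)) by ring. assert (0 <= V * W) by nra. nra.
   - intros p m Hm1 Hm2. destruct m as [|k]; [lia|].
     rewrite rr_pow. fold r.
     assert (vnorm n (fun i => coef (fun s => flim d v w s i) p (S k)) <= V * W * y ^ p * C).
     { apply rmaxn_lub. apply Rmult_le_pos; [|lra]. apply Rmult_le_pos. nra. apply pow_le; lra.
       intros i Hi. apply (coef_f d n v w V W y Kb y p k i); auto; try lia; try lra. }
     assert (r ^ p * y ^ p = 1) by (unfold y; rewrite <- Rpow_mult_distr, Rinv_r, pow1; lra).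
     pose proof (pow_lt r p ltac:(lra)).
     apply Rle_trans with (r ^ p * (V * W * y ^ p * C)). apply Rmult_le_compat_l; lra.
     right. replace (r ^ p * (V * W * y ^ p * C)) with ((r ^ p * y ^ p) * (C * V * W)) by ring.
     rewrite H0. ring. }
 exists (flim d v w). split; [|split; [|split]].
 - apply (unif_conv d n v w Kb y HKb Hx Hbnd).
 - apply (flim_cont d n v w Kb y HKb Hx Hbnd).
 - exists (C * (INR d * B) * Mw). apply HG; auto.
   intros t Ht. apply rmaxn_lub. pose proof (pos_INR d); nra.
   intros i Hi. rewrite <- rsum_const. apply rsum_le. intros j Hj. apply HvB; auto.
 - exact HG.
Qed.
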